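(* Let $n\ge 1$ and $F=F_n(z_n)$. For $k=1,\dots,n$ define the $n\times n$ matrix $$E_k=M_k(2)-f_{k|n}\,e_{k|n}^T,$$ where $M_k(2)$ is the identity matrix with its $(k,k)$ entry replaced by $2$. Then $$F^{-1}=E_nE_{n-1}\cdots E_2E_1,$$ i.e. $F^{-1}=\prod_{i=1}^n\Big(M_{n+1-i}(2)-f_{n+1-i|n}\,e_{n+1-i|n}^T\Big)$ with the factors multiplied from left to right in order of increasing $i$.
   Context: $e_{k|n}\in\mathbb{R}^n$ denotes the $k$-th standard basis vector. For $1\le i\le n$, $e_{\bar i|n}\in\mathbb{R}^n$ has $k$-th entry $1$ if $i\mid k$, else $0$. For $2\le i\le n$, $f_{i|n}=\sum_{t=1}^{\lfloor \log_i n\rfloor} e_{\overline{i^t}|n}$, and by convention $f_{1|n}=1_n$ (all-ones vector). $F_n(z_n)=[f_{1|n}\ f_{2|n}\ \cdots\ f_{n|n}]\in\mathbb{R}^{n\times n}$. *)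

(* Defs.v *)
(* Indices: an ordinal k : 'I_n represents the 1-based index k+1. *)
From HB Require Import structures.
From mathcomp Require Import all_boot all_order all_algebra.
Set Implicit Arguments. Unset Strict Implicit. Unset Printing Implicit Defensive.
Import Order.TTheory GRing.Theory Num.Theory.
Local Open Scope ring_scope.

(* k-th entry (1-based) of f_{i|n}, as a natural number:
   f_{1|n} = 1_n; for i >= 2, sum_{t=1}^{floor(log_i n)} [i^t | k].
   floor(log_i n) = trunc_log i n (for i >= 2, n >= 1). *)
Definition f_entry (i n k : nat) : nat :=
  if i == 1%N then 1%N
  else (\sum_(1 <= t < (trunc_log i n).+1) (i ^ t %| k))%N.

Definition fvec (R : pzRingType) (n : nat) (i : 'I_n) : 'cV[R]_n :=
  \col_(k < n) (f_entry i.+1 n k.+1)%:R.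

Definition evec (R : pzRingType) (n : nat) (k : 'I_n) : 'cV[R]_n :=
  \col_(j < n) (if j == k then 1 else 0).

Definition Fmat (R : pzRingType) (n : nat) : 'M[R]_n :=
  \matrix_(k < n, j < n) (fvec R j) k ord0.

Definition M2 (R : pzRingType) (n : nat) (k : 'I_n) : 'M[R]_n :=
  \matrix_(i < n, j < n) (if i == j then (if i == k then 2 else 1) else 0).

Definition Emat (R : pzRingType) (n : nat) (k : 'I_n) : 'M[R]_n :=
  M2 R k - fvec R k *m (evec R k)^T.

Definition mxprod (R : pzRingType) (n : nat) (s : seq 'M[R]_n) : 'M[R]_n :=
  foldr (@mulmx R n n n) 1%:M s.

(* Main.v *)
Require Import Defs.
From HB Require Import structures.
From mathcomp Require Import all_boot all_order all_algebra.
From mathcomp Require Import ring.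
Import Order.TTheory GRing.Theory Num.Theory.
Local Open Scope ring_scope.

Section Gen.
Variable R : realFieldType.
Variable n : nat.
Variable L : 'M[R]_n.+1.
Hypothesis Lup : forall i j : 'I_n.+1, (i < j)%N -> L i j = 0.
Hypothesis Ldiag : forall i : 'I_n.+1, L i i = 1.

Definition Ek (m : nat) : 'M[R]_n.+1 :=
  \matrix_(i, l) ((i == l)%:R - (L i (inord m) - (i == inord m :> 'I_n.+1)%:R) * (l == inord m :> 'I_n.+1)%:R).
Lemma sum_delta (F : 'I_n.+1 -> R) k : \sum_l (l == k)%:R * F l = F k.
Proof.
rewrite (bigD1 k) //= eqxx mul1r big1 ?addr0 // => l /negbTE ->; by rewrite mul0r.
Qed.
Lemma sum_delta' (F : 'I_n.+1 -> R) k : \sum_l (k == l)%:R * F l = F k.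
Proof. by rewrite -(sum_delta F k); apply: eq_bigr => l _; rewrite eq_sym. Qed.

Definition Gm (m : nat) : 'M[R]_n.+1 :=
  \matrix_(i, j) (if (j < m)%N then (i == j)%:R else L i j).

Lemma step m : (m < n.+1)%N -> Ek m *m Gm m = Gm m.+1.
Proof.
move=> hm; apply/matrixP => i j; rewrite !mxE.
set k : 'I_n.+1 := inord m.
have km : nat_of_ord k = m := inordK hm.
rewrite (eq_bigr (fun l => (i == l)%:R * Gm m l j - (L i k - (i == k)%:R) * ((l == k)%:R * Gm m l j))); last first.
  by move=> l _; rewrite mxE; ring.
rewrite sumrB -mulr_sumr !sum_delta sum_delta'.
have Gk : Gm m k j = (j == k)%:R.
  rewrite mxE; case: ltnP => hj.
    by rewrite eq_sym; have /negbTE-> : j != k by apply/eqP => e; rewrite e km ltnn in hj.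
  case: (ltngtP k j) => h; first by rewrite Lup // ; have /negbTE-> : j != k by apply/eqP=> e; rewrite e ltnn in h.
    by rewrite km ltnNge hj in h.
  by rewrite (val_inj h) eqxx Ldiag.
rewrite Gk !mxE ltnS -km.
case: (eqVneq j k) => [->|hjk] /=.
  rewrite ltnn leqnn mulr1.
  case: (eqVneq i k) => [->|hik]; rewrite ?Ldiag ?eqxx /=; [ring|].
  ring.
rewrite mulr0 subr0 ltn_neqAle.
by have -> : (nat_of_ord j != nat_of_ord k) = true by apply/negP => /eqP/val_inj/eqP; rewrite (negbTE hjk).
Qed.
Lemma prod_step m : (m <= n.+1)%N -> mxprod (map Ek (rev (iota 0 m))) *m L = Gm m.
Proof.
elim: m => [_|m IH hm].
  rewrite /= mul1mx; apply/matrixP => i j; by rewrite mxE.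
have -> : iota 0 m.+1 = iota 0 m ++ [:: m] by rewrite -addn1 iotaD.
rewrite rev_cat /=.
by rewrite -mulmxA IH ?(ltnW hm) // step.
Qed.

Lemma Gm_end : Gm n.+1 = 1%:M.
Proof. by apply/matrixP => i j; rewrite !mxE ltn_ord. Qed.
End Gen.

Lemma f_up (n i j : nat) : (i < j)%N -> f_entry j.+1 n i.+1 = 0%N.
Proof.
move=> hij; rewrite /f_entry; case: j hij => [//|j] hij /=.
rewrite big_nat big1 // => t /andP [ht _].
apply/eqP; rewrite eqb0; apply/negP => /dvdn_leq => /(_ isT).
apply/negP; rewrite -ltnNge.
have h2 : (j.+2 <= j.+2 ^ t)%N.
  by rewrite -[X in (X <= _)%N]expn1 leq_pexp2l.
exact: (leq_trans _ h2).
Qed.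

Lemma f_diag (n j : nat) : (j < n)%N -> f_entry j.+1 n j.+1 = 1%N.
Proof.
move=> hj; rewrite /f_entry; case: j hj => [//|j] hj /=.
have hl : (1 <= trunc_log j.+2 n)%N.
  by apply: trunc_log_max => //; rewrite expn1.
rewrite big_nat_recl // big_nat big1 ?addn0 ?expn1 ?dvdnn //.
move=> t /andP [ht _].
apply/eqP; rewrite eqb0; apply/negP => /dvdn_leq => /(_ isT).
apply/negP; rewrite -ltnNge.
rewrite -[X in (X < _)%N]expn1 ltn_exp2l //.
Qed.

Theorem theorem5 (R : realFieldType) (n : nat) (hn : (1 <= n)%N) :
  Fmat R n \in unitmx /\
  invmx (Fmat R n) = mxprod [seq Emat R k | k <- rev (enum 'I_n)].
Proof.
case: n hn => [//|n] _.
set F := Fmat R n.+1.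
have Lup : forall i j : 'I_n.+1, (i < j)%N -> F i j = 0.
  by move=> i j h; rewrite /F /Fmat !mxE f_up.
have Ldiag : forall i : 'I_n.+1, F i i = 1.
  by move=> i; rewrite /F /Fmat !mxE f_diag.
have -> : [seq Emat R k | k <- rev (enum 'I_n.+1)] = map (@Ek _ _ F) (rev (iota 0 n.+1)).
  rewrite !map_rev; congr rev; rewrite -val_enum_ord -map_comp; apply: eq_map => k /=.
  apply/matrixP => i l; rewrite /Emat /Ek !mxE big_ord1 !mxE inord_val /F /Fmat.
  case: (eqVneq l k) => [->|hl] /=; last first.
    rewrite !mulr0 !subr0; case: (eqVneq i l) => [->|_] //.
    by rewrite (negbTE hl).
  rewrite !mulr1; case: (eqVneq i k) => [->|hi] /=; rewrite ?subr0 //.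
  ring.
have P := @prod_step _ _ F Lup Ldiag _ (leqnn n.+1); rewrite Gm_end in P.
have [_ uF] := mulmx1_unit P.
split=> //.
by rewrite -[RHS]mulmx1 -(mulmxV uF) mulmxA P mul1mx.
Qed.
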